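(* Consider a single round of the following quantum protocol, with honest Bob and an arbitrary strategy of Alice. 1. Alice prepares an arbitrary (possibly mixed) state $\rho_{AB}$ and sends subsystem $B$ to Bob through a noiseless channel. 2. Bob chooses a uniformly random bit $b$, independent of everything else, and announces it. 3. Alice performs a two-outcome POVM on subsystem $A$ (which may depend on $b$) and announces a bit $a$ determined by its outcome. 4. Bob measures his system with the projective measurement $\{|\psi_a\rangle\langle\psi_a|,\ I-|\psi_a\rangle\langle\psi_a|\}$, setting $f=1$ for the first outcome and $f=0$ otherwise. Bob's output bit is $y=a\oplus b$. Let $E(f)=\mathrm P(f=1)$. Then for every $c\in\{0,1\}$, \[ \mathrm P(y=c)\ \le\ \mathcal F(E(f)), \qquad\text{where}\qquad \mathcal F(u)=\min\Big\{\tfrac12+\frac{\sqrt{1-u}}{\sqrt2\,\sin^2\theta}+\frac{1-u}{\sin^2\theta},\ 1\Big\}. \] Moreover, $\mathcal F$ is concave and monotonically non-increasing on $[0,1]$.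
   Context: Fix $\theta\in(0,\pi/2]$. Let $|\psi_0\rangle,|\psi_1\rangle$ be two pure states with $|\langle\psi_0|\psi_1\rangle|^2=\cos^2\theta$. *)

(* Defs.v *)
From HB Require Import structures.
From mathcomp Require Import all_boot all_order all_algebra.
From mathcomp Require Import all_classical all_reals all_analysis.
From mathcomp Require Import complex mxtens.
Set Implicit Arguments. Unset Strict Implicit. Unset Printing Implicit Defensive.
Import Order.TTheory GRing.Theory Num.Theory.
Local Open Scope ring_scope.

Section QDefs.
Variable R : realType.
Local Notation C := R[i].

Definition adj {m n} (A : 'M[C]_(m, n)) : 'M[C]_(n, m) := (map_mx Num.conj A)^T.

Definition hermitian {n} (A : 'M[C]_n) : Prop := adj A = A.

Definition psd {n} (A : 'M[C]_n) : Prop :=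
  hermitian A /\ forall v : 'cV[C]_n, 0 <= (adj v *m A *m v) 0 0.

Definition density {n} (rho : 'M[C]_n) : Prop := psd rho /\ \tr rho = 1.

Definition unit_vec {n} (psi : 'cV[C]_n) : Prop := (adj psi *m psi) 0 0 = 1.

Definition inner {n} (phi psi : 'cV[C]_n) : C := (adj phi *m psi) 0 0.

Definition proj {n} (psi : 'cV[C]_n) : 'M[C]_n := psi *m adj psi.

Definition povm2 {n} (M : bool -> 'M[C]_n) : Prop :=
  psd (M false) /\ psd (M true) /\ M false + M true = 1%:M.

(* Alice's strategy: for each announced b, a two-outcome POVM whose outcome is a *)
(* probability (real part of the trace) of the event "Alice's outcome is a, and Bob's
   projector N clicks", on joint state rho over A (x) B *)
Definition prob_joint {dA dB} (rho : 'M[C]_(dA * dB)) (M : 'M[C]_dA) (N : 'M[C]_dB) : R :=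
  complex.Re (\tr (rho *m tensmx M N)).

(* E(f) = P(f = 1): b uniform, a from Alice's POVM P b, Bob projects on psi a *)
Definition Ef {dA dB} (rho : 'M[C]_(dA * dB)) (P : bool -> bool -> 'M[C]_dA)
  (psi : bool -> 'cV[C]_dB) : R :=
  \sum_(b : bool) \sum_(a : bool) 2^-1 * prob_joint rho (P b a) (proj (psi a)).

Definition Py {dA dB} (rho : 'M[C]_(dA * dB)) (P : bool -> bool -> 'M[C]_dA)
  (c : bool) : R :=
  \sum_(b : bool) \sum_(a : bool | addb a b == c) 2^-1 * prob_joint rho (P b a) 1%:M.

Definition Fbound (theta u : R) : R :=
  Num.min (2^-1 + Num.sqrt (1 - u) / (Num.sqrt 2 * sin theta ^+ 2)
           + (1 - u) / sin theta ^+ 2) 1.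

End QDefs.

(* Main.v *)
Require Import Defs.
From HB Require Import structures.
From mathcomp Require Import all_boot all_order all_algebra.
From mathcomp Require Import all_classical all_reals all_analysis.
From mathcomp Require Import complex mxtens.
From mathcomp Require Import spectral sesquilinear.
Import Order.TTheory GRing.Theory Num.Theory.
Local Open Scope ring_scope.
Local Open Scope complex_scope.
From mathcomp Require Import ring lra.
Set Implicit Arguments. Unset Strict Implicit. Unset Printing Implicit Defensive.
Section S.
Variable R : realType.
Local Notation C := R[i].

Lemma adjE m n (A : 'M[C]_(m, n)) i j : adj A i j = Num.conj (A j i).
Proof. by rewrite !mxE. Qed.

Lemma adjK m n (A : 'M[C]_(m, n)) : adj (adj A) = A.
Proof. by apply/matrixP=> i j; rewrite !adjE conjCK. Qed.

Lemma adjM m n p (A : 'M[C]_(m, n)) (B : 'M[C]_(n, p)) :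
  adj (A *m B) = adj B *m adj A.
Proof.
apply/matrixP=> i j; rewrite adjE !mxE rmorph_sum; apply: eq_bigr => k _.
by rewrite rmorphM !adjE mulrC.
Qed.

Lemma adjD m n (A B : 'M[C]_(m, n)) : adj (A + B) = adj A + adj B.
Proof. by apply/matrixP=> i j; rewrite !mxE rmorphD. Qed.

Lemma adjN m n (A : 'M[C]_(m, n)) : adj (- A) = - adj A.
Proof. by apply/matrixP=> i j; rewrite !mxE rmorphN. Qed.

Lemma adjB m n (A B : 'M[C]_(m, n)) : adj (A - B) = adj A - adj B.
Proof. by rewrite adjD adjN. Qed.

Lemma adjZ m n (a : C) (A : 'M[C]_(m, n)) : adj (a *: A) = Num.conj a *: adj A.
Proof. by apply/matrixP=> i j; rewrite !mxE rmorphM. Qed.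

Lemma adj1 n : adj (1%:M : 'M[C]_n) = 1%:M.
Proof.
by apply/matrixP=> i j; rewrite !mxE eq_sym rmorph_nat.
Qed.

Lemma adj_tens m n p q (A : 'M[C]_(m, n)) (B : 'M[C]_(p, q)) :
  adj (A *t B) = adj A *t adj B.
Proof. by apply/matrixP=> i j; rewrite !mxE rmorphM. Qed.

Lemma tensmxDl m n p q (A1 A2 : 'M[C]_(m, n)) (B : 'M[C]_(p, q)) :
  (A1 + A2) *t B = A1 *t B + A2 *t B.
Proof. by apply/matrixP=> i j; rewrite !mxE mulrDl. Qed.

Lemma tensmxDr m n p q (A : 'M[C]_(m, n)) (B1 B2 : 'M[C]_(p, q)) :
  A *t (B1 + B2) = A *t B1 + A *t B2.
Proof. by apply/matrixP=> i j; rewrite !mxE mulrDr. Qed.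

Lemma tensmxZr m n p q (A : 'M[C]_(m, n)) (a : C) (B : 'M[C]_(p, q)) :
  A *t (a *: B) = a *: (A *t B).
Proof. by apply/matrixP=> i j; rewrite !mxE mulrCA. Qed.

Lemma tensmx11 m n : (1%:M : 'M[C]_m) *t (1%:M : 'M[C]_n) = 1%:M.
Proof.
apply/matrixP=> i j.
case: (mxtens_indexP i)=> i0 i1; case: (mxtens_indexP j)=> j0 j1.
rewrite tensmxE !mxE (can_eq (@mxtens_indexK _ _)) xpair_eqE.
by case: (i0 == j0); case: (i1 == j1); rewrite /= ?mulr1 ?mulr0 ?mul0r.
Qed.

Lemma psd_tr n (rho : 'M[C]_n) (hr : psd rho) k (W : 'M[C]_(k, n)) :
  0 <= \tr (W *m rho *m adj W).
Proof.
case: hr => _ hq; rewrite /mxtrace; apply: sumr_ge0 => i _.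
have := hq (adj (row i W)); rewrite adjK.
suff -> : (row i W *m rho *m adj (row i W)) 0 0 = (W *m rho *m adj W) i i by [].
rewrite !mxE; apply: eq_bigr => j _; rewrite !mxE; congr (_ * _).
by apply: eq_bigr => l _; rewrite !mxE.
Qed.

End S.
Section S3.
Variable R : realType.
Local Notation C := R[i].

Lemma adj_tc m n (M : 'M[C]_(m, n)) : (M ^t Num.conj)%sesqui = adj M.
Proof. by apply/matrixP=> i j; rewrite !mxE. Qed.

Lemma adj_delta n (i : 'I_n) : adj (delta_mx i 0 : 'cV[C]_n) = delta_mx 0 i.
Proof.
apply/matrixP=> a b; rewrite !mxE rmorph_nat ord1 eqxx andbT.
by rewrite [b == i]eq_sym.
Qed.

Lemma psd_decomp n (P : 'M[C]_n) : psd P -> exists Z : 'M[C]_n, P = adj Z *m Z.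
Proof.
move=> [hP hq].
set U := spectralmx P; set d := spectral_diag P.
have Nn : P \is normalmx by apply/normalmxP; rewrite !adj_tc hP.
have eP := orthomx_spectralP Nn; rewrite -/U -/d in eP.
have Uu : U \is unitarymx by apply: spectral_unitarymx.
rewrite invmx_unitary // adj_tc in eP.
have UU : U *m adj U = 1%:M by rewrite -adj_tc; apply/unitarymxP.
have dge : forall i, 0 <= d 0 i.
  move=> i; have := hq (adj U *m delta_mx i 0).
  rewrite adjM adjK adj_delta eP !mulmxA.
  rewrite -[delta_mx 0 i *m U *m adj U]mulmxA UU mulmx1.
  rewrite -(mulmxA _ U (adj U)) UU mulmx1.
  by rewrite -colE -rowE !mxE eqxx mulr1n.
exists (diag_mx (map_mx sqrtC d) *m U).
rewrite {1}eP adjM !mulmxA -(mulmxA (adj U)); congr (_ *m _ *m _).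
apply/matrixP=> i j; rewrite mul_mx_diag !mxE.
case: (eqVneq i j) => [->|nij]; last first.
  by rewrite !mulr0n rmorph0 mul0r.
rewrite !mulr1n geC0_conj ?sqrtC_ge0 // -expr2 sqrtCK //.
Qed.

End S3.
Section S4.
Variable R : realType.
Local Notation C := R[i].

Definition phi {dA dB} (rho : 'M[C]_(dA * dB)) (M : 'M[C]_dA) (N : 'M[C]_dB) : C :=
  \tr (rho *m (M *t N)).

Variables (dA dB : nat) (rho : 'M[C]_(dA * dB)).

Lemma phiD M (N1 N2 : 'M[C]_dB) : phi rho M (N1 + N2) = phi rho M N1 + phi rho M N2.
Proof. by rewrite /phi tensmxDr mulmxDr mxtraceD. Qed.

Lemma phiZ M a (N : 'M[C]_dB) : phi rho M (a *: N) = a * phi rho M N.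
Proof. by rewrite /phi tensmxZr -scalemxAr mxtraceZ. Qed.

Lemma phiN M (N : 'M[C]_dB) : phi rho M (- N) = - phi rho M N.
Proof. by rewrite -scaleN1r phiZ mulN1r. Qed.

Lemma phiB M (N1 N2 : 'M[C]_dB) : phi rho M (N1 - N2) = phi rho M N1 - phi rho M N2.
Proof. by rewrite phiD phiN. Qed.

Lemma phiDl (M1 M2 : 'M[C]_dA) (N : 'M[C]_dB) :
  phi rho (M1 + M2) N = phi rho M1 N + phi rho M2 N.
Proof. by rewrite /phi tensmxDl mulmxDr mxtraceD. Qed.

Lemma phi_pos (M : 'M[C]_dA) : psd rho -> psd M ->
  forall k (Y : 'M[C]_(k, dB)), 0 <= phi rho M (adj Y *m Y).
Proof.
move=> hr hM k Y; have [Z ->] := psd_decomp hM.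
rewrite /phi -tensmx_mul -!adj_tens mulmxA mxtrace_mulC mulmxA.
exact: psd_tr.
Qed.

End S4.
Section S5.
Variable R : realType.
Local Notation C := R[i].

Lemma ReM_real (r : R) (z : C) : complex.Re (r%:C * z) = r * complex.Re z.
Proof. by case: z => a b; simpc. Qed.

Lemma ReN (z : C) : complex.Re (- z) = - complex.Re z.
Proof. by case: z. Qed.

Lemma ReD (z w : C) : complex.Re (z + w) = complex.Re z + complex.Re w.
Proof. by case: z; case: w. Qed.

Lemma ReB (z w : C) : complex.Re (z - w) = complex.Re z - complex.Re w.
Proof. by rewrite ReD ReN. Qed.

Lemma Re_ge0 (z : C) : 0 <= z -> 0 <= complex.Re z.
Proof. by rewrite lecE => /andP[]. Qed.

Lemma conj_real (r : R) : Num.conj (r%:C) = r%:C.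
Proof. exact: conjc_real. Qed.

Lemma adj0 m n : adj (0 : 'M[C]_(m, n)) = 0.
Proof. by apply/matrixP=> i j; rewrite !mxE rmorph0. Qed.

Lemma outer_mul n (u v z t : 'cV[C]_n) :
  (u *m adj v) *m (z *m adj t) = inner v z *: (u *m adj t).
Proof.
by rewrite mulmxA -(mulmxA u) [adj v *m z]mx11_scalar mul_mx_scalar -scalemxAl.
Qed.

Lemma inner_adj n (u v : 'cV[C]_n) : inner v u = Num.conj (inner u v).
Proof. by rewrite /inner -adjE adjM adjK. Qed.

End S5.

Lemma g_sub_cancel (V : zmodType) (Z U : V) : Z - (U - U) = Z.
Proof. by rewrite subrr subr0. Qed.

Lemma g_perm4 (V : zmodType) (w b a d : V) : w + b + (a + d) = d + a + b + w.
Proof.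
rewrite [RHS]addrC -addrA; congr (_ + _).
by rewrite addrC; congr (_ + _); rewrite addrC.
Qed.

Lemma g_half (K : pzRingType) (h a b c d : K) :
  h * a + h * b + (h * c + h * d) = h * (a + b + (c + d)).
Proof. by rewrite !mulrDr. Qed.

Lemma g_ring (K : comNzRingType) (l b cb F1 F2 F3 F4 : K) :
  l * (l * F1) + l * (b * F2) + (cb * (l * F3) + cb * (b * F4)) =
  l * l * F1 + l * (b * F2 + cb * F3) + cb * b * F4.
Proof. ring. Qed.
Section S6.
Variable R : realType.
Local Notation C := R[i].

Lemma key_identities n (x y : 'cV[C]_n) (hx : unit_vec x) (hy : unit_vec y) (c2 : R)
  (hc : inner x y * Num.conj (inner x y) = c2%:C) :
  let a := inner x y in let w := y - a *: x in
  [/\ inner x x = 1, inner x w = 0, inner w x = 0, inner w w = (1 - c2)%:C &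
      Defs.proj y = (c2%:C : C) *: Defs.proj x + a *: (x *m adj w) + Num.conj a *: (w *m adj x)
               + w *m adj w].
Proof.
move=> a w.
have im : forall u v : 'cV[C]_n, adj u *m v = (inner u v)%:M.
  by move=> u v; rewrite [LHS]mx11_scalar.
have xx : inner x x = 1 by [].
have yy : inner y y = 1 by [].
have xw : inner x w = 0.
  rewrite /inner /w mulmxBr -scalemxAr !im xx -/a !mxE eqxx !mulr1n mulr1.
  by rewrite subrr.
have wx : inner w x = 0 by rewrite inner_adj xw rmorph0.
have ww : inner w w = (1 - c2)%:C.
  rewrite /inner {2}/w mulmxBr -scalemxAr !im wx !mxE eqxx !mulr1n mulr0 subr0.
  rewrite /inner /w adjB adjZ mulmxBl -scalemxAl !im yy -/a !mxE eqxx !mulr1n.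
  by rewrite mulrC hc rmorphB.
split => //.
have ey : y = w + a *: x by rewrite /w subrK.
rewrite /Defs.proj {1 2}ey adjD adjZ mulmxDl mulmxDr mulmxDr -!scalemxAl -!scalemxAr.
rewrite scalerA -hc mulrC.
exact: g_perm4.
Qed.

End S6.
Section S7.
Variable R : realType.

Lemma arith1 (c2 p e X y T lam : R) : 0 < lam -> 0 <= c2 -> 0 < 1 - c2 ->
  0 <= y -> y <= (1 - c2) * e -> X = p - e ->
  0 <= lam * lam * X + lam * T + c2 * y ->
  0 <= lam * lam * X - lam * T + c2 * y ->
  `|(X - (c2 * X + T + y)) - (1 - c2) * p| <=
     2 * (1 - c2) * e + lam * p + c2 * (1 - c2) * e / lam.
Proof.
move=> hl hc hs hy hye hX h1 h2.
have he : 0 <= e.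
  have : 0 <= (1 - c2) * e by apply: le_trans hye.
  by rewrite pmulr_rge0.
have hT : `|T| <= lam * X + c2 * y / lam.
  have -> : lam * X + c2 * y / lam = (lam * lam * X + c2 * y) / lam.
    by field; rewrite gt_eqF.
  have : `|T * lam| <= lam * lam * X + c2 * y.
    by rewrite ler_norml; apply/andP; split; nra.
  by rewrite normrM (gtr0_norm hl) ler_pdivlMr.
have hq : c2 * y / lam <= c2 * (1 - c2) * e / lam.
  rewrite ler_pM2r ?invr_gt0 // -mulrA; exact: ler_wpM2l.
set q := c2 * (1 - c2) * e / lam in hq *.
rewrite hX in hT *.
have lT := ler_norml T (lam * (p - e) + c2 * y / lam).
move: hT; rewrite lT => /andP[hT1 hT2].
rewrite ler_norml; apply/andP; split; nra.
Qed.

End S7.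
Section S8.
Variable R : realType.
Local Notation C := R[i].
Variable n : nat.
Variable f : 'M[C]_n -> C.
Hypothesis fD : forall A B, f (A + B) = f A + f B.
Hypothesis fZ : forall a A, f (a *: A) = a * f A.
Hypothesis fpos : forall k (Y : 'M[C]_(k, n)), 0 <= f (adj Y *m Y).

Lemma f0 : f 0 = 0.
Proof. by rewrite -(scale0r (0 : 'M[C]_n)) fZ mul0r. Qed.

Lemma fN A : f (- A) = - f A.
Proof. by rewrite -scaleN1r fZ mulN1r. Qed.

Lemma fB A B : f (A - B) = f A - f B.
Proof. by rewrite fD fN. Qed.

Lemma f_lin4 l b cb (A1 A2 A3 A4 : 'M[C]_n) :
  f (l *: (l *: A1) + l *: (b *: A2) + (cb *: (l *: A3) + cb *: (b *: A4))) =
  l * (l * f A1) + l * (b * f A2) + (cb * (l * f A3) + cb * (b * f A4)).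
Proof. by rewrite !fD !fZ. Qed.

Lemma key_ineq (x y : 'cV[C]_n) (hx : unit_vec x) (hy : unit_vec y) (c2 : R)
  (hc : inner x y * Num.conj (inner x y) = c2%:C) (c2ge : 0 <= c2)
  (hs : 0 < 1 - c2) (lam : R) (hl : 0 < lam) :
  `|complex.Re (f (Defs.proj x - Defs.proj y)) - (1 - c2) * complex.Re (f 1%:M)| <=
    2 * (1 - c2) * complex.Re (f (1%:M - Defs.proj x)) + lam * complex.Re (f 1%:M)
    + c2 * (1 - c2) * complex.Re (f (1%:M - Defs.proj x)) / lam.
Proof.
have [xx xw wx ww ey] := key_identities hx hy hc.
set a := inner x y in xx xw wx ww ey hc *.
set w := y - a *: x in xx xw wx ww ey *.
set X := Defs.proj x.
set W := w *m adj w.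
set s2 := 1 - c2 in hs ww *.
have XX : X *m X = X by rewrite /X /Defs.proj outer_mul xx scale1r.
have XW : X *m W = 0 by rewrite /X /Defs.proj outer_mul xw scale0r.
have WX : W *m X = 0 by rewrite /W outer_mul wx scale0r.
have WW : W *m W = s2%:C *: W by rewrite /W outer_mul ww.
have adjX : adj X = X by rewrite /X /Defs.proj adjM adjK.
have adjW : adj W = W by rewrite /W adjM adjK.
have yge : 0 <= complex.Re (f W).
  by apply: Re_ge0; rewrite /W -{1}(adjK w); apply: fpos.
have yle : complex.Re (f W) <= s2 * complex.Re (f (1%:M - X)).
  pose M := s2%:C *: (1%:M - X) - W.
  have QQ : (1%:M - X) *m (1%:M - X) = 1%:M - X.
    by rewrite mulmxBl mul1mx mulmxBr mulmx1 XX subrr subr0.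
  have QW : (1%:M - X) *m W = W by rewrite mulmxBl mul1mx XW subr0.
  have WQ : W *m (1%:M - X) = W by rewrite mulmxBr mulmx1 WX subr0.
  have adjM' : adj M = M by rewrite /M adjB adjZ conj_real adjB adj1 adjX adjW.
  have MM : adj M *m M = s2%:C *: M.
    rewrite adjM' {1}/M mulmxBl -scalemxAl /M mulmxBr -scalemxAr QQ mulmxBr.
    rewrite -scalemxAr QW WW.
    rewrite scalerBr scalerBr WQ; exact: g_sub_cancel.
  have : 0 <= f (adj M *m M) by apply: fpos.
  rewrite MM fZ pmulr_rge0 ?ltcR // /M fB fZ => /Re_ge0.
  by rewrite ReB ReM_real subr_ge0.
set u := f (x *m adj w); set v := f (w *m adj x).
have hD : forall b : C,
  0 <= (lam * lam)%:C * f X + lam%:C * (b * u + Num.conj b * v) + (Num.conj b * b) * f W.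
  move=> b; pose Y := lam%:C *: X + b *: (x *m adj w).
  have := fpos Y; congr (_ <= _).
  rewrite /Y adjD !adjZ conj_real adjX adjM adjK mulmxDl !mulmxDr -!scalemxAl -!scalemxAr.
  rewrite XX /X /Defs.proj !outer_mul xx !scale1r -/(Defs.proj x) -/X -/W.
  rewrite f_lin4 rmorphM /= /u /v; exact: g_ring.
have ca : Num.conj a * a = c2%:C by rewrite mulrC.
have h1 := hD a; have h2 := hD (- a).
have eT : (- a) * u + Num.conj (- a) * v = - (a * u + Num.conj a * v).
  by rewrite rmorphN !mulNr opprD.
rewrite eT rmorphN mulrNN ca in h2.
rewrite ca in h1.
move/Re_ge0: h1; rewrite !ReD !ReM_real => h1.
move/Re_ge0: h2; rewrite !ReD !ReM_real ReN => h2.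
have fy : f (Defs.proj y) = c2%:C * f X + (a * u + Num.conj a * v) + f W.
  by rewrite ey !fD !fZ -/X -/u -/v -/W !addrA.
rewrite (fB X) fy (fB 1%:M X) !ReB !ReD !ReM_real.
apply: arith1 => //.
- by move: yle; rewrite fB ReB.
- lra.
- by move: h1; rewrite ReD.
- by move: h2; rewrite ReD mulrN.
Qed.
End S8.
Section S9.
Variable R : realType.

Lemma sqrt_concave (a b t : R) : 0 <= a -> 0 <= b -> 0 <= t <= 1 ->
  t * Num.sqrt a + (1 - t) * Num.sqrt b <= Num.sqrt (t * a + (1 - t) * b).
Proof.
move=> ha hb /andP[ht0 ht1].
have sa := sqrtr_ge0 a; have sb := sqrtr_ge0 b.
have ea := sqr_sqrtr ha; have eb := sqr_sqrtr hb.
have x0 : 0 <= t * Num.sqrt a + (1 - t) * Num.sqrt b.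
  apply: addr_ge0; apply: mulr_ge0 => //; lra.
rewrite -(ger0_norm x0) -sqrtr_sqr; apply: ler_wsqrtr.
rewrite -{2}ea -{2}eb.
have : 0 <= t * (1 - t) * (Num.sqrt a - Num.sqrt b) ^+ 2.
  apply: mulr_ge0; [apply: mulr_ge0; lra | exact: sqr_ge0].
move=> h; nra.
Qed.

Lemma sin_sq_pos (theta : R) : 0 < theta <= pi / 2 -> 0 < sin theta ^+ 2.
Proof.
move=> /andP[h0 h1]; apply: exprn_gt0; apply: sin_gt0_pi; rewrite h0 /=.
apply: le_lt_trans h1 _; have := pi_gt0 R; lra.
Qed.

Lemma Fbound_props (theta : R) : 0 < theta <= pi / 2 ->
  (forall u v t : R, 0 <= u <= 1 -> 0 <= v <= 1 -> 0 <= t <= 1 ->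
     t * Fbound theta u + (1 - t) * Fbound theta v
       <= Fbound theta (t * u + (1 - t) * v)) /\
  (forall u v : R, 0 <= u <= 1 -> 0 <= v <= 1 -> u <= v ->
     Fbound theta v <= Fbound theta u).
Proof.
move=> hth; have hL := sin_sq_pos hth.
set L := sin theta ^+ 2 in hL *.
have hK : 0 < Num.sqrt 2 * L by rewrite mulr_gt0 // sqrtr_gt0.
set K := Num.sqrt 2 * L in hK *.
rewrite /Fbound -/L -/K.
have hKi : 0 < K^-1 by rewrite invr_gt0.
have hLi : 0 < L^-1 by rewrite invr_gt0.
split.
- move=> u v t hu hv ht.
  have hsq := sqrt_concave (a := 1 - u) (b := 1 - v) (t := t).
  have e : 1 - (t * u + (1 - t) * v) = t * (1 - u) + (1 - t) * (1 - v) by ring.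
  rewrite e.
  have hsq' : t * Num.sqrt (1 - u) + (1 - t) * Num.sqrt (1 - v) <=
      Num.sqrt (t * (1 - u) + (1 - t) * (1 - v)).
    apply: hsq => //; lra.
  set m1 := Num.min _ 1; set m2 := Num.min _ 1.
  have h1 : m1 <= 1 by rewrite /m1 ge_min lexx orbT.
  have h2 : m2 <= 1 by rewrite /m2 ge_min lexx orbT.
  have g1 : m1 <= 2^-1 + Num.sqrt (1 - u) / K + (1 - u) / L by rewrite /m1 ge_min lexx.
  have g2 : m2 <= 2^-1 + Num.sqrt (1 - v) / K + (1 - v) / L by rewrite /m2 ge_min lexx.
  case/andP: ht => ht0 ht1.
  rewrite le_min; apply/andP; split; last by nra.
  have : Num.sqrt (t * (1 - u) + (1 - t) * (1 - v)) / K >=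
      t * (Num.sqrt (1 - u) / K) + (1 - t) * (Num.sqrt (1 - v) / K).
    by rewrite !mulrA -mulrDl ler_pM2r.
  move=> hh.
  have e2 : (t * (1 - u) + (1 - t) * (1 - v)) / L =
     t * ((1 - u) / L) + (1 - t) * ((1 - v) / L) by ring.
  rewrite e2.
  have : 0 <= t by []. have : 0 <= 1 - t by lra.
  nra.
- move=> u v hu hv huv.
  rewrite le_min; apply/andP; split; rewrite ge_min ?lexx ?orbT //.
  apply/orP; left.
  apply: lerD; first apply: lerD => //.
    by rewrite ler_pM2r //; apply: ler_wsqrtr; lra.
  by rewrite ler_pM2r //; lra.
Qed.

End S9.
Section S10.
Variable R : realType.

Lemma le0_forall (x : R) : (forall lam : R, 0 < lam -> x <= lam) -> x <= 0.
Proof.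
move=> H; case: (ltrP 0 x) => // hx.
have := H (x / 2); rewrite divr_gt0 // => /(_ isT); lra.
Qed.

Lemma arith2 (c2 s2 p00 p01 p10 p11 e00 e01 e10 e11 D00 D01 D10 D11 : R) :
  c2 = 1 - s2 -> 0 < s2 <= 1 -> 0 <= e00 -> 0 <= e01 -> 0 <= e10 -> 0 <= e11 ->
  p00 + p01 = 1 -> p10 + p11 = 1 -> D00 + D01 = D10 + D11 ->
  (forall lam, 0 < lam -> `|D00 - s2 * p00| <= 2 * s2 * e00 + lam * p00 + c2 * s2 * e00 / lam) ->
  (forall lam, 0 < lam -> `|- D01 - s2 * p01| <= 2 * s2 * e01 + lam * p01 + c2 * s2 * e01 / lam) ->
  (forall lam, 0 < lam -> `|D10 - s2 * p10| <= 2 * s2 * e10 + lam * p10 + c2 * s2 * e10 / lam) ->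
  (forall lam, 0 < lam -> `|- D11 - s2 * p11| <= 2 * s2 * e11 + lam * p11 + c2 * s2 * e11 / lam) ->
  `|p00 - p10| / 2 <= Num.sqrt ((e00 + e01 + e10 + e11) / 2) / (Num.sqrt 2 * s2)
                      + (e00 + e01 + e10 + e11) / 2 / s2.
Proof.
move=> hc2 /andP[hs0 hs1] he00 he01 he10 he11 hp0 hp1 hD H00 H01 H10 H11.
set del := (e00 + e01 + e10 + e11) / 2.
have hdel : 0 <= del by rewrite /del; apply: divr_ge0 => //; lra.
have key : forall lam, 0 < lam ->
    s2 * `|p00 - p10| <= 2 * s2 * del + lam + c2 * s2 * del / lam.
  move=> lam hl.
  have := H00 lam hl; have := H01 lam hl; have := H10 lam hl; have := H11 lam hl.
  set q := c2 * s2 / lam.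
  have eq : forall e, c2 * s2 * e / lam = q * e.
    by move=> e; rewrite /q mulrAC.
  rewrite !eq.
  move=> h11 h10 h01 h00.
  have hn : `|p00 - p10| * s2 = `|s2 * (p00 - p10)| by rewrite normrM (gtr0_norm hs0) mulrC.
  rewrite mulrC hn.
  move: h00 h01 h10 h11; rewrite !ler_norml => /andP[a1 a2] /andP[b1 b2] /andP[cc1 cc2] /andP[d1 d2].
  rewrite /del; apply/andP; split; nra.
have hs2 : 0 < Num.sqrt (2:R) by rewrite sqrtr_gt0.
have e2 : Num.sqrt (2:R) ^+ 2 = 2 by rewrite sqr_sqrtr // ler0n.
have cs : c2 * s2 <= 1 / 4 by rewrite hc2; have := sqr_ge0 (s2 - 1 / 2); rewrite expr2; nra.
case: (eqVneq del 0) => [d0|dn0].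
  have : s2 * `|p00 - p10| <= 0.
    apply: le0_forall => lam hl; have := key lam hl; rewrite d0 !mulr0 mul0r; lra.
  rewrite pmulr_rle0 // => hn.
  have -> : `|p00 - p10| = 0 by apply/le_anti; rewrite hn normr_ge0.
  rewrite mul0r d0 sqrtr0 !mul0r addr0; lra.
have dpos : 0 < del by rewrite lt_def dn0 hdel.
have hr : 0 < Num.sqrt del by rewrite sqrtr_gt0.
have er := sqr_sqrtr hdel.
set r := Num.sqrt del in hr er *; set q := Num.sqrt 2 in hs2 e2 *.
have := key (r / q) (divr_gt0 hr hs2).
have -> : c2 * s2 * del / (r / q) = c2 * s2 * r * q.
  by rewrite -er; field; rewrite !gt_eqF.
move=> hk.
have goal' : s2 * `|p00 - p10| <= r * q + 2 * del.
  have : r / q = r * q / 2 by rewrite -e2; field; rewrite gt_eqF.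
  move=> erq; rewrite erq in hk.
  have : 0 <= r * q by rewrite mulr_ge0 // ltW.
  nra.
have -> : r / (q * s2) + del / s2 = (r * q + 2 * del) / (2 * s2).
  have -> : r / (q * s2) = r * q / (2 * s2).
    by rewrite -e2; field; rewrite !gt_eqF.
  by field; rewrite gt_eqF.
rewrite ler_pdivlMr ?mulr_gt0 //.
have -> : `|p00 - p10| / 2 * (2 * s2) = s2 * `|p00 - p10|.
  by field.
exact: goal'.
Qed.

End S10.
Section S10b.
Variable R : realType.

Lemma arith3 (c : bool) (pff pft ptf ptt eff eft etf ett Ef s2 : R) :
  pff + pft = 1 -> ptf + ptt = 1 ->
  0 <= pff -> 0 <= pft -> 0 <= ptf -> 0 <= ptt ->
  Ef = 2^-1 * ((ptt - ett) + (ptf - etf) + ((pft - eft) + (pff - eff))) ->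
  `|pff - ptf| / 2 <= Num.sqrt ((eff + eft + etf + ett) / 2) / (Num.sqrt 2 * s2)
                      + (eff + eft + etf + ett) / 2 / s2 ->
  (if c then 2^-1 * (ptf + pft) else 2^-1 * (ptt + pff)) <=
  Num.min (2^-1 + Num.sqrt (1 - Ef) / (Num.sqrt 2 * s2) + (1 - Ef) / s2) 1.
Proof.
move=> h0 h1 g1 g2 g3 g4 hE A.
have -> : 1 - Ef = (eff + eft + etf + ett) / 2 by rewrite hE; lra.
have nA := ler_norm (pff - ptf).
have nB : - (pff - ptf) <= `|pff - ptf| by rewrite -normrN ler_norm.
rewrite le_min; apply/andP; split; last by case: c; lra.
apply: (le_trans (y := 2^-1 + `|pff - ptf| / 2)); first by case: c; lra.
by rewrite -addrA lerD2l.
Qed.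

End S10b.
Section S11.
Variable R : realType.
Local Notation C := R[i].

Lemma compl_proj_pos n (x : 'cV[C]_n) : unit_vec x ->
  adj (1%:M - Defs.proj x) *m (1%:M - Defs.proj x) = 1%:M - Defs.proj x.
Proof.
move=> hx.
have XX : Defs.proj x *m Defs.proj x = Defs.proj x.
  by rewrite /Defs.proj outer_mul; have -> : inner x x = 1 by []; rewrite scale1r.
rewrite adjB adj1 /Defs.proj adjM adjK -/(Defs.proj x).
by rewrite mulmxBl mul1mx mulmxBr mulmx1 XX subrr subr0.
Qed.

End S11.
Unset Implicit Arguments.

Theorem lemma1 (R : realType) (theta : R) (htheta : 0 < theta <= pi / 2)
  (dA dB : nat) (psi : bool -> 'cV[R[i]]_dB)
  (hpsi0 : unit_vec (psi false)) (hpsi1 : unit_vec (psi true))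
  (hover : `|inner (psi false) (psi true)| ^+ 2 = (cos theta ^+ 2)%:C)
  (rho : 'M[R[i]]_(dA * dB)) (hrho : density rho)
  (P : bool -> bool -> 'M[R[i]]_dA) (hP : forall b, povm2 (P b)) :
  (forall c : bool, Py rho P c <= Fbound theta (Ef rho P psi)) /\
  (forall u v t : R, 0 <= u <= 1 -> 0 <= v <= 1 -> 0 <= t <= 1 ->
     t * Fbound theta u + (1 - t) * Fbound theta v
       <= Fbound theta (t * u + (1 - t) * v)) /\
  (forall u v : R, 0 <= u <= 1 -> 0 <= v <= 1 -> u <= v ->
     Fbound theta v <= Fbound theta u).
Proof.
have [hFc hFm] := Fbound_props htheta.
split; last by split.
move=> c.
case: hrho => hrp htr.
set x := psi false in hpsi0 hover *; set y := psi true in hpsi1 hover *.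
set c2 := cos theta ^+ 2 in hover.
have hs2e : sin theta ^+ 2 = 1 - c2 by rewrite sin2cos2.
have hs : 0 < 1 - c2 by rewrite -hs2e; apply: sin_sq_pos.
have c2ge : 0 <= c2 by apply: sqr_ge0.
have hcxy : inner x y * Num.conj (inner x y) = c2%:C by rewrite -normCK hover.
have hcyx : inner y x * Num.conj (inner y x) = c2%:C.
  by rewrite inner_adj conjCK mulrC.
have Pp : forall b a, psd (P b a).
  by move=> b [] ; case: (hP b) => [h1 [h2 _]].
have Psum : forall b, P b false + P b true = 1%:M by move=> b; case: (hP b) => [_ [_ ->]].
pose f b a := phi rho (P b a).
pose p b a := complex.Re (f b a 1%:M).
pose e b a := complex.Re (f b a (1%:M - Defs.proj (psi a))).
pose D b a := complex.Re (f b a (Defs.proj x - Defs.proj y)).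
have K0 : forall b lam, 0 < lam ->
    `|D b false - (1 - c2) * p b false| <=
      2 * (1 - c2) * e b false + lam * p b false + c2 * (1 - c2) * e b false / lam.
  move=> b lam hl.
  exact: (key_ineq (phiD rho (P b false)) (phiZ rho (P b false))
           (phi_pos hrp (Pp b false)) hpsi0 hpsi1 hcxy c2ge hs hl).
have K1 : forall b lam, 0 < lam ->
    `|- D b true - (1 - c2) * p b true| <=
      2 * (1 - c2) * e b true + lam * p b true + c2 * (1 - c2) * e b true / lam.
  move=> b lam hl.
  have := (key_ineq (phiD rho (P b true)) (phiZ rho (P b true))
           (phi_pos hrp (Pp b true)) hpsi1 hpsi0 hcyx c2ge hs hl).
  by rewrite /D /f -[Defs.proj y - Defs.proj x]opprB phiN ReN.
have hpp : forall b, p b false + p b true = 1.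
  move=> b; rewrite /p /f -ReD -phiDl Psum /phi tensmx11 mulmx1.
  by move: htr => ->.
have hDD : D false false + D false true = D true false + D true true.
  by rewrite /D /f -!ReD -!phiDl !Psum.
have he : forall b a, 0 <= e b a.
  move=> b a; apply: Re_ge0; rewrite -compl_proj_pos; last by case: a.
  exact: phi_pos.
have hpge : forall b a, 0 <= p b a.
  move=> b a; apply: Re_ge0; rewrite /f -[1%:M](mul1mx 1%:M) -{1}adj1.
  exact: phi_pos.
have hEf : Ef rho P psi = 2^-1 * ((p true true - e true true) + (p true false - e true false)
    + ((p false true - e false true) + (p false false - e false false))).
  rewrite /Ef !big_bool /=.
  have ee : forall b a, prob_joint rho (P b a) (Defs.proj (psi a)) = p b a - e b a.
    move=> b a; rewrite /p /e /f phiB ReB opprB addrC subrK //.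
  rewrite (ee true true) (ee true false) (ee false true) (ee false false).
  exact: g_half.
have hs12 : 0 < 1 - c2 <= 1 by rewrite hs /= gerBl.
have hc2 : c2 = 1 - (1 - c2) by rewrite opprB addrC subrK.
have A := arith2 hc2 hs12 (he false false) (he false true)
   (he true false) (he true true) (hpp false) (hpp true) hDD (K0 false) (K1 false) (K0 true) (K1 true).
have pj : forall b a, prob_joint rho (P b a) 1%:M = p b a by [].
have hPy : Py rho P c = if c then 2^-1 * (p true false + p false true)
                        else 2^-1 * (p true true + p false false).
  rewrite /Py big_bool /= big_mkcond big_bool /= big_mkcond big_bool /= !pj.
  case: c => /=; rewrite ?add0r ?addr0; exact: esym (mulrDr _ _ _).
rewrite /Fbound hs2e hPy.
exact: (arith3 c (hpp false) (hpp true) (hpge false false) (hpge false true)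
   (hpge true false) (hpge true true) hEf A).
Qed.
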